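(* For all $a,b\in\mathbb{R}$ with $|a|,|b|\le2$, \[ (1+\cos a)(1+\cos b)\ge 2+2\cos\big(\sqrt{a^2+b^2}\big), \] with equality only for $a=0$ or $b=0$. *)

(* Defs.v *)
From Stdlib Require Import Reals.

(* Main.v *)
Require Import Defs.
From Stdlib Require Import Reals Lra.
From Coquelicot Require Import Coquelicot.
Open Scope R_scope.

Lemma tanT y r : 0 < y -> y < r -> r < PI/2 ->
  sin y / (y * cos y) < sin r / (r * cos r).
Proof.
  intros Hy Hyr Hr.
  pose (m := fun z => sin z / (z * cos z)).
  pose (m' := fun z => (z - sin z * cos z) / (z * cos z)^2).
  destruct (MVT_cor2 m m' y r Hyr) as [c [Hc1 Hc2]].
  { intros c Hc. apply is_derive_Reals.
    assert (0 < cos c) by (apply cos_gt_0; pose proof PI_RGT_0; lra).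
    unfold m, m'. auto_derive.
    - apply Rgt_not_eq, Rmult_lt_0_compat; lra.
    - field_simplify. replace (sin c ^ 2) with (1 - cos c ^ 2) by (rewrite <- (sin2_cos2 c); unfold Rsqr; ring). field. lra. all: lra. }
  unfold m in Hc1.
  assert (0 < cos c) by (apply cos_gt_0; pose proof PI_RGT_0; lra).
  assert (0 < m' c).
  { unfold m'. apply Rdiv_lt_0_compat.
    - pose proof (sin_lt_x c ltac:(lra)). pose proof (sin_gt_0 c ltac:(lra) ltac:(pose proof PI_RGT_0; lra)).
      pose proof (COS_bound c). nra.
    - apply pow_lt, Rmult_lt_0_compat; lra. }
  nra.
Qed.

Lemma mainL x y0 : 0 < x -> 0 < y0 -> x <= 1 -> y0 <= 1 ->
  cos (sqrt (x^2 + y0^2)) < cos x * cos y0.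
Proof.
  intros Hx Hy Hx1 Hy1.
  pose proof PI2_3_2 as HPI.
  assert (Hs : forall c, 0 <= c <= 1 -> sqrt (x^2 + c^2) < 3/2 /\ c < sqrt (x^2+c^2) /\ 0 < sqrt (x^2+c^2)).
  { intros c Hc. split; [|split].
    - apply Rsqr_incrst_0; unfold Rsqr; try lra. rewrite sqrt_sqrt; nra. apply sqrt_pos.
    - apply Rsqr_incrst_0; unfold Rsqr; try lra. rewrite sqrt_sqrt; nra. apply sqrt_pos.
    - apply sqrt_lt_R0; nra. }
  pose (H := fun c => cos (sqrt (x^2 + c^2)) / cos c).
  pose (H' := fun c => (-(sin (sqrt (x^2+c^2))) * (c / sqrt (x^2+c^2)) * cos c
                          + cos (sqrt (x^2+c^2)) * sin c) / (cos c)^2).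
  destruct (MVT_cor2 H H' 0 y0 Hy) as [c [Hc1 Hc2]].
  { intros c Hc. apply is_derive_Reals.
    assert (0 < cos c) by (apply cos_gt_0; lra).
    destruct (Hs c ltac:(lra)) as [A [B C]].
    unfold H, H'. auto_derive.
    - split; [nra|]. split; [|auto]. lra.
    - replace (x*(x*1)+c*(c*1)) with (x^2+c^2) by ring. field. lra. }
  destruct (Hs c ltac:(lra)) as [A [B C]].
  destruct (Hs y0 ltac:(lra)) as [A' [B' C']].
  assert (0 < cos c) by (apply cos_gt_0; lra).
  assert (0 < cos (sqrt (x^2+c^2))) by (apply cos_gt_0; lra).
  assert (0 < cos y0) by (apply cos_gt_0; lra).
  pose proof (tanT c (sqrt (x^2+c^2)) ltac:(lra) B ltac:(lra)) as T.
  assert (H' c < 0).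
  { unfold H'. set (r := sqrt (x^2+c^2)) in *.
    assert (E1 : sin c * cos r = (sin c / (c * cos c)) * (c * cos c * cos r)) by (field; lra).
    assert (E2 : sin r * (c / r) * cos c = (sin r / (r * cos r)) * (c * cos c * cos r)) by (field; lra).
    assert (0 < c * cos c * cos r) by (apply Rmult_lt_0_compat; [apply Rmult_lt_0_compat|]; lra).
    assert (N : - sin r * (c / r) * cos c + cos r * sin c < 0) by nra.
    assert (0 < / (cos c ^2)) by (apply Rinv_0_lt_compat, pow_lt; lra).
    unfold Rdiv at 2. nra. }
  unfold H in Hc1.
  replace (0^2) with 0 in Hc1 by ring. rewrite Rplus_0_r, sqrt_pow2, cos_0 in Hc1 by lra.
  assert (K : cos (sqrt (x ^ 2 + y0 ^ 2)) / cos y0 < cos x).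
  { assert (H' c * (y0 - 0) < 0) by nra. lra. }
  apply (Rmult_lt_compat_r (cos y0)) in K; auto.
  replace (cos (sqrt (x ^ 2 + y0 ^ 2)) / cos y0 * cos y0) with (cos (sqrt (x ^ 2 + y0 ^ 2))) in K by (field; lra).
  lra.
Qed.

Lemma cos_abs t : cos (Rabs t) = cos t.
Proof. unfold Rabs; destruct (Rcase_abs t); [apply cos_neg|reflexivity]. Qed.

Theorem lemma3p3 (a b : R) (ha : Rabs a <= 2) (hb : Rabs b <= 2) :
  (1 + cos a) * (1 + cos b) >= 2 + 2 * cos (sqrt (a ^ 2 + b ^ 2)) /\
  ((1 + cos a) * (1 + cos b) = 2 + 2 * cos (sqrt (a ^ 2 + b ^ 2)) <->
   (a = 0 \/ b = 0)).
Proof.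
  pose proof PI2_3_2 as HPI.
  set (x := Rabs a / 2). set (y := Rabs b / 2).
  assert (Hx0 : 0 <= x) by (unfold x; pose proof (Rabs_pos a); lra).
  assert (Hy0 : 0 <= y) by (unfold y; pose proof (Rabs_pos b); lra).
  assert (Hx1 : x <= 1) by (unfold x; lra).
  assert (Hy1 : y <= 1) by (unfold y; lra).
  assert (Ea : 1 + cos a = 2 * cos x ^ 2).
  { rewrite <- cos_abs. replace (Rabs a) with (2 * x) by (unfold x; field).
    rewrite cos_2a_cos. ring. }
  assert (Eb : 1 + cos b = 2 * cos y ^ 2).
  { rewrite <- cos_abs. replace (Rabs b) with (2 * y) by (unfold y; field).
    rewrite cos_2a_cos. ring. }
  assert (Er : sqrt (a^2 + b^2) = 2 * sqrt (x^2 + y^2)).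
  { replace (a^2+b^2) with (2^2 * (x^2+y^2)).
    - rewrite sqrt_mult by nra. rewrite sqrt_pow2 by lra. reflexivity.
    - unfold x, y. replace ((Rabs a/2)^2) with (Rabs a ^2 / 4) by field.
      replace ((Rabs b/2)^2) with (Rabs b ^2 / 4) by field. rewrite !pow2_abs. field. }
  set (r := sqrt (x^2+y^2)) in *.
  assert (Hr : 0 <= r < 3/2).
  { split. apply sqrt_pos. apply Rsqr_incrst_0; unfold Rsqr; try lra.
    unfold r; rewrite sqrt_sqrt; nra. apply sqrt_pos. }
  assert (Er2 : 2 + 2 * cos (sqrt (a ^ 2 + b ^ 2)) = 4 * cos r ^ 2).
  { rewrite Er, cos_2a_cos. ring. }
  rewrite Ea, Eb, Er2.
  assert (0 < cos x) by (apply cos_gt_0; lra).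
  assert (0 < cos y) by (apply cos_gt_0; lra).
  assert (0 < cos r) by (apply cos_gt_0; lra).
  assert (Z : forall u v, 0 <= u -> v = 0 -> sqrt (u^2 + v^2) = u).
  { intros u v Hu ->. replace (u^2+0^2) with (u^2) by ring. apply sqrt_pow2; lra. }
  assert (Hxz : x = 0 <-> a = 0).
  { unfold x; split; intro h. destruct (Req_dec a 0); auto. pose proof (Rabs_pos_lt a H2); lra.
    rewrite h, Rabs_R0; field. }
  assert (Hyz : y = 0 <-> b = 0).
  { unfold y; split; intro h. destruct (Req_dec b 0); auto. pose proof (Rabs_pos_lt b H2); lra.
    rewrite h, Rabs_R0; field. }
  destruct (Req_dec x 0) as [X0|X0].
  { assert (r = y) by (unfold r; rewrite Rplus_comm; apply Z; lra).
    rewrite X0, H2, cos_0. split; [lra|]. split; intros; [left; apply Hxz; auto|ring]. }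
  destruct (Req_dec y 0) as [Y0|Y0].
  { assert (r = x) by (unfold r; apply Z; lra).
    rewrite Y0, H2, cos_0. split; [lra|]. split; intros; [right; apply Hyz; auto|ring]. }
  pose proof (mainL x y ltac:(lra) ltac:(lra) Hx1 Hy1) as M. fold r in M.
  assert (cos r ^ 2 < (cos x * cos y)^2) by nra.
  split; [nra|]. split; intros h.
  - nra.
  - exfalso. destruct h as [h|h]; [apply Hxz in h|apply Hyz in h]; lra. 
Qed.
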